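(* Let $G$ be a simple graph with edge set $E$ and $t$ triangles, let $\epsilon\in(0,1)$ and $\widetilde{t}>0$. Let $P=(E_0,E_1)$ be any partition of $E$, and assign each triangle to its first edge (according to a fixed arbitrary predefined order on edges) that lies in $E_0$, if such exists; otherwise (all three edges in $E_1$) the triangle is not assigned. For an edge $e$ let $a_P(e)$ be the number of triangles assigned to $e$. Then $\sum_{e\in E}a_P(e)\le t$. Furthermore, if $|E_1|\le 3(\epsilon\widetilde{t})^{2/3}$ and $\widetilde{t}\in[t/4,t]$, then $\sum_{e\in E_0}a_P(e)\ge(1-12\epsilon)t$. *)

(* Defs.v *)
From HB Require Import structures.
From mathcomp Require Import all_boot all_order all_algebra.
From mathcomp Require Import all_classical all_reals all_analysis.
Set Implicit Arguments. Unset Strict Implicit. Unset Printing Implicit Defensive.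
Import Order.TTheory GRing.Theory Num.Theory.

Section Graph.
Variable (V : finType) (adj : rel V).

Definition edge_set : {set {set V}} :=
  [set f : {set V} | [exists x, exists y, (x != y) && adj x y && (f == [set x; y])]].

Definition triangles : {set {set V}} :=
  [set D : {set V} | (#|D| == 3) &&
     [forall x in D, forall y in D, (x != y) ==> adj x y]].

Definition edges_of (D : {set V}) : {set {set V}} :=
  [set f : {set V} | (f \subset D) && (#|f| == 2)].

(* Triangle D is assigned to edge e (w.r.t. partition part E0 and ranking r
   encoding the fixed order on edges): e is an edge of D lying in E0 and it is
   the first (smallest rank) among the edges of D lying in E0. *)
Definition assigned (E0 : {set {set V}}) (r : {set V} -> nat)
  (D e : {set V}) : bool :=
  [&& e \in edges_of D, e \in E0 &
      [forall f in edges_of D, (f \in E0) ==> (r e <= r f)%N]].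

Definition aP (E0 : {set {set V}}) (r : {set V} -> nat) (e : {set V}) : nat :=
  #|[set D in triangles | assigned E0 r D e]|.

End Graph.

(* Main.v *)
Require Import Defs.
From HB Require Import structures.
From mathcomp Require Import all_boot all_order all_algebra.
From mathcomp Require Import all_classical all_reals all_analysis.
From mathcomp Require Import lra ring.
Import Order.TTheory GRing.Theory Num.Theory.
Lemma card_sep (T : finType) (A : {set T}) (P : pred T) :
  #|[set x in A | P x]| = \sum_(x in A) (P x : nat).
Proof.
rewrite -sum1_card big_mkcond [RHS]big_mkcond /=.
by apply: eq_bigr => x _; rewrite !inE; case: (x \in A); case: (P x).
Qed.

Lemma card_sum (T : finType) (A : {set T}) :
  #|A| = \sum_x (x \in A : nat).
Proof. by rewrite -sum1_card big_mkcond /=; apply: eq_bigr => x _; case: (x \in A). Qed.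

Lemma tri_edge (V : finType) (adj : rel V) D f :
  D \in triangles adj -> f \in edges_of D -> f \in edge_set adj.
Proof.
rewrite !inE => /andP[_ /forallP H] /andP[sfD /cards2P[x [y [xy fE]]]]; subst f.
have xD : x \in D := fintype.subsetP sfD x (set21 x y).
have yD : y \in D := fintype.subsetP sfD y (set22 x y).
apply/existsP; exists x; apply/existsP; exists y.
rewrite xy eqxx /= andbT.
by move: (H x) => /implyP/(_ xD)/forallP/(_ y)/implyP/(_ yD)/implyP/(_ xy).
Qed.

Lemma assigned_uniq (V : finType) (adj : rel V) E0 r
  (hr : {in edge_set adj &, injective r}) D e f :
  D \in triangles adj -> assigned E0 r D e -> assigned E0 r D f -> e = f.
Proof.
move=> HD /and3P[eD e0 /forall_inP He] /and3P[fD f0 /forall_inP Hf].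
apply: hr; [exact: tri_edge HD eD | exact: tri_edge HD fD|].
apply/eqP; rewrite eqn_leq.
by rewrite (implyP (He f fD) f0) (implyP (Hf e eD) e0).
Qed.

Lemma assigned_ex (V : finType) (E0 : {set {set V}}) (r : {set V} -> nat) (D f : {set V}) :
  f \in edges_of D -> f \in E0 -> exists e, assigned E0 r D e.
Proof.
move=> fD f0.
have Pf : f \in [pred g | (g \in edges_of D) && (g \in E0)] by rewrite inE fD f0.
case: (arg_minnP r Pf) => e /andP[eD e0] He.
exists e; rewrite /assigned eD e0 /=.
apply/forall_inP => g gD; apply/implyP => g0; apply: He; exact/andP.
Qed.
Lemma edge_card (V : finType) (adj : rel V) e : e \in edge_set adj -> #|e| = 2.
Proof.
rewrite inE => /existsP[x /existsP[y /andP[/andP[xy _] /eqP ->]]].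
by rewrite cards2 xy.
Qed.

Lemma sum_deg (V : finType) (adj : rel V) (E1 : {set {set V}}) :
  E1 \subset edge_set adj ->
  \sum_v #|[set e in E1 | v \in e]| = 2 * #|E1|.
Proof.
move=> sE.
under eq_bigr => v _ do rewrite card_sep.
rewrite exchange_big /= -sum1_card big_distrr /=.
apply: eq_bigr => e eE; rewrite muln1 -(@edge_card _ adj e (fintype.subsetP sE e eE)).
by rewrite card_sum.
Qed.

Lemma sum_c (V : finType) (T1 : {set {set V}}) :
  T1 \subset [set D : {set V} | #|D| == 3] ->
  \sum_v #|[set D in T1 | v \in D]| = 3 * #|T1|.
Proof.
move=> sT.
under eq_bigr => v _ do rewrite card_sep.
rewrite exchange_big /= -sum1_card big_distrr /=.
apply: eq_bigr => D DT; rewrite muln1.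
have := fintype.subsetP sT D DT; rewrite inE => /eqP <-.
by rewrite card_sum.
Qed.

Lemma c_le_m (V : finType) (adj : rel V) (E1 : {set {set V}}) v :
  let T1 := [set D in triangles adj | edges_of D \subset E1] in
  #|[set D in T1 | v \in D]| <= #|E1|.
Proof.
rewrite /=; set T1 := [set D in triangles adj | _].
have inj : {in [set D in T1 | v \in D] &, injective (fun D => D :\ v)}.
  move=> D1 D2; rewrite !inE => /andP[_ v1] /andP[_ v2] E.
  by rewrite -(finset.setD1K v1) -(finset.setD1K v2) E.
rewrite -(card_in_imset inj); apply: subset_leq_card.
apply/fintype.subsetP => e /imsetP[D]; rewrite !inE => /andP[/andP[/andP[c3 _] sE] vD] ->.
apply: (fintype.subsetP sE); rewrite inE subD1set /=.
by move: (cardsD1 v D); rewrite vD (eqP c3) add1n => -[<-].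
Qed.

Lemma c_le_d2 (V : finType) (adj : rel V) (E1 : {set {set V}}) v :
  let T1 := [set D in triangles adj | edges_of D \subset E1] in
  #|[set D in T1 | v \in D]| <= #|[set e in E1 | v \in e]| ^ 2.
Proof.
rewrite /=; set T1 := [set D in triangles adj | _]; set Ev := [set e in E1 | v \in e].
apply: (@leq_trans #|[set e :|: f | e in Ev, f in Ev]|).
  apply: subset_leq_card; apply/fintype.subsetP => D.
  rewrite !inE => /andP[/andP[/andP[c3 _] sE] vD].
  have : #|D :\ v| == 2 by move: (cardsD1 v D); rewrite vD (eqP c3) add1n => -[<-].
  move=> /cards2P[a [b [ab Dab]]].
  have aD : a \in D :\ v by rewrite Dab set21.
  have bD : b \in D :\ v by rewrite Dab set22.
  move: (aD) (bD); rewrite !inE => /andP[av aD'] /andP[bv bD'].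
  have edge z : z \in D -> z != v -> [set v; z] \in Ev.
    move=> zD zv; rewrite inE set21 andbT; apply: (fintype.subsetP sE).
    rewrite inE cards2 /=. idtac.
    rewrite eqSS (eq_sym v z) zv andbT; apply/fintype.subsetP => w.
    by rewrite !inE => /orP[/eqP -> | /eqP ->].
  apply/imset2P; exists [set v; a] [set v; b]; [exact: edge|exact: edge|].
  rewrite -(finset.setD1K vD) Dab; apply/setP => w; rewrite !inE.
  by case: (w == v); case: (w == a); case: (w == b).
by rewrite curry_imset2X (leq_trans (leq_imset_card _ _)) // cardsX.
Qed.
Local Open Scope ring_scope.
Lemma real_c (R : realType) (y : R) (c d m : nat) : 0 < y ->
  (c <= m)%N -> (c <= d ^ 2)%N -> c%:R <= d%:R * (y + m%:R / y).
Proof.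
move=> y0 cm cd.
have m0 : 0 <= m%:R / y :> R by rewrite divr_ge0 // ltW.
have d0 : 0 <= d%:R :> R by [].
case: (leP (d%:R) y) => dy.
- apply: (le_trans (y := d%:R * d%:R)).
    by rewrite -natrM ler_nat mulnn.
  apply: (le_trans (y := d%:R * y)); first by rewrite ler_wpM2l.
  by rewrite ler_wpM2l // lerDl.
- apply: (le_trans (y := m%:R)); first by rewrite ler_nat.
  apply: (le_trans (y := d%:R * (m%:R / y))); last by rewrite ler_wpM2l // lerDr ltW.
  apply: (le_trans (y := y * (m%:R / y))); first by rewrite mulrC divfK ?gt_eqF.
  by rewrite ler_wpM2r // ltW.
Qed.

Lemma real_pow (R : realType) (x : R) : 0 < x ->
  let y := x `^ (3^-1) in y ^+ 3 = x /\ x `^ (2 / 3 : R) = y ^+ 2.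
Proof.
move=> x0 y; have x0' := ltW x0.
split.
  by rewrite /y -powR_mulrn ?powR_ge0 // -powRrM mulVf // powRr1.
by rewrite /y -powR_mulrn ?powR_ge0 // -powRrM mulrC.
Qed.

Theorem claim3p5 (R : realType) (V : finType) (adj : rel V)
  (adj_sym : symmetric adj) (adj_irr : irreflexive adj)
  (eps tt : R) (heps0 : 0 < eps) (heps1 : eps < 1) (htt : 0 < tt)
  (E0 E1 : {set {set V}})
  (hpart : E0 :|: E1 = edge_set adj) (hdisj : [disjoint E0 & E1])
  (r : {set V} -> nat) (hr : {in edge_set adj &, injective r}) :
  let t := #|triangles adj| in
  (\sum_(e in edge_set adj) aP adj E0 r e <= t)%N /\
  ((#|E1|%:R <= 3 * (eps * tt) `^ (2 / 3 : R) ->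
    t%:R / 4 <= tt -> tt <= t%:R ->
    (1 - 12 * eps) * t%:R <= (\sum_(e in E0) aP adj E0 r e)%:R)).
Proof.
move=> t.
have sE0 : E0 \subset edge_set adj by rewrite -hpart finset.subsetUl.
have sE1 : E1 \subset edge_set adj by rewrite -hpart finset.subsetUr.
have Hsum (S : {set {set V}}) : (\sum_(e in S) aP adj E0 r e =
   \sum_(D in triangles adj) #|[set e in S | assigned E0 r D e]|)%N.
  rewrite /aP; under eq_bigr do rewrite card_sep.
  by rewrite exchange_big /=; apply: eq_bigr => D _; rewrite card_sep.
have Hle1 (S : {set {set V}}) D : D \in triangles adj -> (#|[set e in S | assigned E0 r D e]| <= 1)%N.
  move=> HD; apply/card_le1_eqP => e f; rewrite !inE => /andP[_ ae] /andP[_ af].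
  exact: (@assigned_uniq _ _ _ _ hr _ _ _ HD af ae).
split.
  rewrite Hsum /t -sum1_card; apply: leq_sum => D HD; exact: Hle1.
move=> hm ht1 ht2.
set T1 := [set D in triangles adj | edges_of D \subset E1].
have Ht : (t <= #|T1| + \sum_(e in E0) aP adj E0 r e)%N.
  rewrite Hsum /T1 card_sep -big_split /= /t -sum1_card.
  apply: leq_sum => D HD.
  case: (boolP (edges_of D \subset E1)) => [//|/subsetPn [f fD fE1]] /=.
  have fE : f \in edge_set adj := @tri_edge _ adj D f HD fD.
  have f0 : f \in E0 by move: fE; rewrite -hpart inE (negbTE fE1) orbF.
  have [e ae] := @assigned_ex _ E0 r D f fD f0.
  rewrite add0n; apply/card_gt0P; exists e; rewrite inE ae andbT.
  by case/and3P: ae.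
set m := #|E1|.
set x := eps * tt.
have x0 : 0 < x by rewrite mulr_gt0.
have [y3 y2] := @real_pow R x x0.
set y := x `^ 3^-1 in y3 y2.
have y0 : 0 < y by rewrite powR_gt0.
have HT1 : (3 * #|T1|)%:R <= (2 * m)%:R * (y + m%:R / y) :> R.
  have sT : T1 \subset [set D : {set V} | #|D| == 3].
    by apply/fintype.subsetP => D; rewrite !inE => /andP[/andP[-> _] _].
  rewrite -(@sum_c _ T1 sT) -(@sum_deg _ adj E1 sE1) !natr_sum mulr_suml.
  apply: ler_sum => v _; apply: real_c => //.
    exact: (@c_le_m _ adj E1 v).
  exact: (@c_le_d2 _ adj E1 v).
have hm' : m%:R <= 3 * y ^+ 2 by rewrite -y2.
set w := m%:R / y.
have w0 : 0 <= w by rewrite divr_ge0 // ltW.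
have mw : m%:R = w * y by rewrite /w divfK ?gt_eqF.
have w3 : w <= 3 * y.
  rewrite -(ler_pM2r y0) -mw; apply: (le_trans hm'); rewrite expr2; lra.
have HT1' : 3 * (#|T1|%:R) <= 24 * x.
  have := HT1; rewrite natrM natrM mw -y3 => H.
  apply: (le_trans H).
  have A : y + w <= 4 * y by lra.
  have B : 2%:R * (w * y) <= 6 * (y * y).
    nra.
  have P1 : 0 <= 2%:R * (w * y) by rewrite mulr_ge0 // mulr_ge0 // ltW.
  have P2 : 0 <= y + w by lra.
  have C := ler_pM P1 P2 B A.
  rewrite mulfK ?gt_eqF //; apply: (le_trans C); rewrite le_eqVlt; apply/orP; left; apply/eqP; ring.
have Hx : x <= eps * t%:R by rewrite /x ler_pM2l.
have Ht' : t%:R <= #|T1|%:R + (\sum_(e in E0) aP adj E0 r e)%:R :> R.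
  by rewrite -natrD ler_nat.
have E12 : 12 * eps * t%:R = 12 * (eps * t%:R) :> R by rewrite mulrA.
have -> : (1 - 12 * eps) * t%:R = t%:R - 12 * (eps * t%:R) :> R by ring.
lra.
Qed.
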